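(* Let $d \geq 2$ and let $\varGamma$ be a lattice in $\mathbb{R}^d$. Let $R \in \operatorname{SOS}(\varGamma)$. Then: (1) $b\cdot \operatorname{scal}_\varGamma(R) \subset \operatorname{scal}_\varGamma(R)$ for all $b \in \mathbb{Q}\setminus\{0\}$; (2) if $r \in \mathbb{R}$ satisfies $r\varGamma \sim \varGamma$, then $r \in \mathbb{Q}$; (3) $\alpha\beta^{-1} \in \mathbb{Q}$ for all $\alpha, \beta \in \operatorname{scal}_\varGamma(R)$.
   Context: A lattice in $\mathbb{R}^d$ is a subgroup of the form $\mathbb{Z}b_1\oplus\cdots\oplus\mathbb{Z}b_d$ where $\{b_1,\dots,b_d\}$ is a basis of $\mathbb{R}^d$. Two lattices (more generally, subgroups) $\varGamma,\varGamma'$ of $\mathbb{R}^d$ are commensurate, written $\varGamma\sim\varGamma'$, if $\varGamma\cap\varGamma'$ has finite index both in $\varGamma$ and in $\varGamma'$. For $R\in\operatorname{SO}(d)$, $\operatorname{scal}_\varGamma(R)=\{\alpha\in\mathbb{R} : \varGamma\sim\alpha R\varGamma\}$. The group of similarity rotations is $\operatorname{SOS}(\varGamma)=\{R\in\operatorname{SO}(d) : \varGamma\sim\alpha R\varGamma \text{ for some } \alpha>0\}$, equivalently the set of $R\in\operatorname{SO}(d)$ with $\operatorname{scal}_\varGamma(R)\neq\varnothing$. *)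

(* Defs.v *)
From HB Require Import structures.
From mathcomp Require Import all_boot all_order all_algebra.
From mathcomp Require Import reals.
Set Implicit Arguments. Unset Strict Implicit. Unset Printing Implicit Defensive.
Import Order.TTheory GRing.Theory Num.Theory.
Local Open Scope ring_scope.

Section Defs.
Variables (R : realType) (d : nat).

Definition subsetRd := 'rV[R]_d -> Prop.

(* The lattice Z b_1 + ... + Z b_d, where the rows of B are the b_i. *)
Definition lattice_of (B : 'M[R]_d) : subsetRd :=
  fun x => exists z : 'rV[int]_d, x = map_mx intr z *m B.

Definition is_lattice (G : subsetRd) : Prop :=
  exists B : 'M[R]_d, B \in unitmx /\ G = lattice_of B.

Definition setI_Rd (G H : subsetRd) : subsetRd := fun x => G x /\ H x.

Definition finite_index (H G : subsetRd) : Prop :=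
  exists s : seq 'rV[R]_d, (forall y, y \in s -> G y) /\
    forall x, G x -> exists2 y, y \in s & H (x - y).

Definition commensurate (G G' : subsetRd) : Prop :=
  finite_index (setI_Rd G G') G /\ finite_index (setI_Rd G G') G'.

Definition is_SO (Q : 'M[R]_d) : Prop := Q^T *m Q = 1%:M /\ \det Q = 1.

(* alpha Q G = { alpha * Q x | x in G }, with Q acting on column vectors:
   on row vectors x this is x *m Q^T. *)
Definition scale_rot (alpha : R) (Q : 'M[R]_d) (G : subsetRd) : subsetRd :=
  fun y => exists2 x, G x & y = alpha *: (x *m Q^T).

Definition scal (G : subsetRd) (Q : 'M[R]_d) : R -> Prop :=
  fun alpha => commensurate G (scale_rot alpha Q G).

Definition SOS (G : subsetRd) : 'M[R]_d -> Prop :=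
  fun Q => is_SO Q /\ exists alpha, 0 < alpha /\ commensurate G (scale_rot alpha Q G).

Definition scale_set (r : R) (G : subsetRd) : subsetRd :=
  fun y => exists2 x, G x & y = r *: x.

Definition is_rational (r : R) : Prop := exists q : rat, r = ratr q.
End Defs.

(* Main.v *)
Require Import Defs.
From HB Require Import structures.
From mathcomp Require Import all_boot all_order all_algebra.
From mathcomp Require Import reals.
From mathcomp Require Import ring.
From Stdlib Require Import FunctionalExtensionality PropExtensionality Classical IndefiniteDescription.
Import Order.TTheory GRing.Theory Num.Theory.
Local Open Scope ring_scope.

Section Aux.
Variables (R : realType) (d : nat).
Implicit Types (M B : 'M[R]_d) (x y : 'rV[R]_d).

Lemma lat0 M : lattice_of M 0.
Proof. by exists 0; rewrite map_mx0 mul0mx. Qed.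

Lemma latD M x y : lattice_of M x -> lattice_of M y -> lattice_of M (x + y).
Proof. by move=> [u ->] [v ->]; exists (u + v); rewrite map_mxD mulmxDl. Qed.

Lemma latN M x : lattice_of M x -> lattice_of M (- x).
Proof. by move=> [u ->]; exists (- u); rewrite map_mxN mulNmx. Qed.

Lemma latB M x y : lattice_of M x -> lattice_of M y -> lattice_of M (x - y).
Proof. by move=> hx hy; apply: latD => //; apply: latN. Qed.

Lemma latMn M x k : lattice_of M x -> lattice_of M (x *+ k).
Proof.
move=> hx; elim: k => [|k IH]; first by rewrite mulr0n; apply: lat0.
by rewrite mulrS; apply: latD.
Qed.

Lemma lat_rescale M (a : R) (k : int) x :
  lattice_of M x -> lattice_of (a *: M) ((k%:~R * a) *: x).
Proof.
move=> [u ->]; exists (k *: u).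
rewrite map_mxZ /= -scalemxAr -scalemxAl scalerA.
by rewrite mulrC.
Qed.

Lemma lat_zscale M (k : int) x : lattice_of M x -> lattice_of M (k%:~R *: x).
Proof. by move=> /(@lat_rescale M 1 k); rewrite scale1r mulr1. Qed.

Lemma scale_rot_lat (a : R) (Q B : 'M[R]_d) :
  scale_rot a Q (lattice_of B) = lattice_of (a *: (B *m Q^T)).
Proof.
apply: functional_extensionality => x; apply: propositional_extensionality.
split.
  by move=> [y [u ->] ->]; exists u; rewrite -scalemxAr mulmxA.
by move=> [u ->]; exists (map_mx intr u *m B); [exists u | rewrite -scalemxAr mulmxA].
Qed.

Lemma scale_set_lat (r : R) B :
  scale_set r (lattice_of B) = lattice_of (r *: B).
Proof.
apply: functional_extensionality => x; apply: propositional_extensionality.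
split.
  by move=> [y [u ->] ->]; exists u; rewrite -scalemxAr.
by move=> [u ->]; exists (map_mx intr u *m B); [exists u | rewrite -scalemxAr].
Qed.

Lemma pigeon (H L : subsetRd R d) x :
  (forall a b, H a -> H b -> H (a - b)) -> (forall k, L (x *+ k)) ->
  finite_index H L -> exists2 k, (0 < k)%N & H (x *+ k).
Proof.
move=> hH hL [s [_ cov]].
apply: NNPP => hno.
set n := size s.
have ex (i : 'I_n.+1) : exists j : 'I_n, H (x *+ i.+1 - nth 0 s j).
  have [y ys hy] := cov _ (hL i.+1).
  by exists (Ordinal (etrans (index_mem y s) ys)); rewrite /= nth_index.
pose f i := proj1_sig (constructive_indefinite_description _ (ex i)).
have fP (i : 'I_n.+1) : H (x *+ i.+1 - nth 0 s (f i)).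
  exact: proj2_sig (constructive_indefinite_description _ (ex i)).
have key (i1 i2 : 'I_n.+1) : f i1 = f i2 -> (i1 < i2)%N -> False.
  move=> e lt; apply: hno; exists (i2 - i1)%N; first by rewrite subn_gt0.
  have := hH _ _ (fP i2) (fP i1); rewrite e.
  have -> : x *+ i2.+1 - nth 0 s (f i2) - (x *+ i1.+1 - nth 0 s (f i2)) =
            x *+ i2.+1 - x *+ i1.+1 by rewrite opprB addrA subrK.
  by rewrite -mulrnBr // ltnS ltnW.
have inj : injective f.
  move=> i1 i2 e; case: (ltngtP i1 i2) => [lt|lt|eq]; last exact: val_inj.
    by case: (key _ _ e lt).
  by case: (key _ _ (esym e) lt).
by have := leq_card f inj; rewrite !card_ord ltnn.
Qed.

Lemma fi_lift (B1 M : 'M[R]_d) (N : nat) (c : R) (H H' : subsetRd R d) :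
  N.+1%:R *: M = c *: B1 -> finite_index H (lattice_of B1) ->
  (forall h, H h -> H' (c *: h)) -> finite_index H' (lattice_of M).
Proof.
move=> eNM [s [hs cov]] hH.
pose F (t : 'rV['I_N.+1]_d) : 'rV[int]_d := map_mx (fun i : 'I_N.+1 => (i : nat)%:Z) t.
pose T := [seq F t | t : 'rV['I_N.+1]_d].
exists [seq c *: y + map_mx intr z *m M | y <- s, z <- T].
split.
  move=> w /allpairsP [[y z] [/= ys zT ->]].
  apply: latD; last by exists z.
  have [u ->] := hs y ys.
  rewrite scalemxAr -eNM -scalemxAr scaler_nat; apply: latMn; by exists u.
move=> x [z ->].
pose z' : 'rV[int]_d := \row_j ((z ord0 j) %/ N.+1)%Z.
pose t : 'rV['I_N.+1]_d := \row_j inord (absz ((z ord0 j) %% N.+1)%Z).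
have ez : map_mx intr z = N.+1%:R *: map_mx intr z' + map_mx intr (F t) :> 'rV[R]_d.
  apply/rowP => j; rewrite !mxE.
  have h0 : (0 <= ((z ord0 j) %% N.+1)%Z)%R by rewrite modz_ge0.
  rewrite inordK; last first.
    by rewrite -ltz_nat gez0_abs // ltz_pmod.
  rewrite gez0_abs // {1}(divz_eq (z ord0 j) N.+1) rmorphD rmorphM /= mulrC.
  by [].
have [y ys hy] := cov (map_mx intr z' *m B1) (ex_intro _ z' erefl).
exists (c *: y + map_mx intr (F t) *m M).
  apply/allpairsP; exists (y, F t); split => //=.
  by rewrite map_f ?mem_enum.
rewrite ez mulmxDl -scalemxAl scalemxAr eNM -scalemxAr.
rewrite opprD addrACA subrr addr0 -scalerBr.
by apply: hH.
Qed.

Lemma setI_sub (L1 L2 : 'M[R]_d) a b :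
  setI_Rd (lattice_of L1) (lattice_of L2) a ->
  setI_Rd (lattice_of L1) (lattice_of L2) b ->
  setI_Rd (lattice_of L1) (lattice_of L2) (a - b).
Proof. by move=> [h1 h2] [h3 h4]; split; apply: latB. Qed.

Lemma scal_lat B Q a :
  scal (lattice_of B) Q a = commensurate (lattice_of B) (lattice_of (a *: (B *m Q^T))).
Proof. by rewrite /scal scale_rot_lat. Qed.

Lemma cancel_B B (U V : 'rV[R]_d) : B \in unitmx -> U *m B = V *m B -> U = V.
Proof. by move=> hB e; rewrite -(mulmxK hB U) e mulmxK. Qed.

End Aux.

Theorem mainTheorem1 (R : realType) (d : nat) (hd : (2 <= d)%N)
  (G : subsetRd R d) (hG : is_lattice G) (Q : 'M[R]_d) (hQ : SOS G Q) :
  (forall b : rat, b != 0 -> forall alpha : R,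
      scal G Q alpha -> scal G Q (ratr b * alpha)) /\
  (forall r : R, commensurate (scale_set r G) G -> is_rational r) /\
  (forall alpha beta : R, scal G Q alpha -> scal G Q beta ->
      is_rational (alpha * beta^-1)).
Proof.
move: hG hQ => [B [hB ->]] [[hQ1 _] _].
have d0 : (0 < d)%N by apply: leq_trans hd.
pose i0 : 'I_d := Ordinal d0.
pose e0 : 'rV[int]_d := delta_mx ord0 i0.
have ee0 (k : R) : (k *: map_mx intr e0) ord0 i0 = k :> R.
  by rewrite !mxE !eqxx /= mulr1.
split; last split.
-
  move=> b bn0 al; rewrite !scal_lat => -[hA1 hA2].
  set X := B *m Q^T.
  set p := numq b; set q := denq b.
  have qn0 : q%:~R != 0 :> R by rewrite intr_eq0 denq_neq0.
  have pn0 : p != 0 by rewrite numq_eq0.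
  have erb : ratr b = p%:~R / q%:~R :> R.
    by rewrite -{1}(divq_num_den b) fmorph_div !rmorph_int.
  have [N eN] : exists N, absz ((p * q) ^+ 2) = N.+1.
    exists (absz ((p * q) ^+ 2)).-1; rewrite prednK // absz_gt0 expf_eq0 /=.
    by rewrite mulf_eq0 negb_or pn0 denq_neq0.
  have eNR : N.+1%:R = ((p * q) ^+ 2)%:~R :> R.
    by rewrite -eN natr_absz ger0_norm // sqr_ge0.
  have e1 : (p * q ^+ 3)%:~R * ratr b = N.+1%:R :> R.
    by rewrite eNR erb !rmorphM /=; field.
  have e2 : N.+1%:R * ratr b = (p ^+ 3 * q)%:~R :> R.
    by rewrite eNR erb !rmorphM /=; field.
  split.
    apply: (@fi_lift _ _ B B N N.+1%:R _ _ _ hA1) => // h [hG hK]; split.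
      by rewrite eNR; apply: lat_zscale.
    by rewrite -e1 -scalerA; move: (@lat_rescale _ _ _ (ratr b) (p * q ^+ 3) _ hK); rewrite scalerA mulrC.
  apply: (@fi_lift _ _ (al *: X) ((ratr b * al) *: X) N (N.+1%:R * ratr b) _ _ _ hA2).
    by rewrite !scalerA mulrA.
  move=> h [hG hK]; split.
    by rewrite e2; apply: lat_zscale.
  rewrite eNR -scalerA.
  exact: (@lat_rescale _ _ _ (ratr b) ((p * q) ^+ 2) _ hK).
-
  move=> r; rewrite scale_set_lat => -[_ h2].
  have [k k0 [[z hz] _]] := @pigeon _ _ _ _ (map_mx intr e0 *m B) (@setI_sub _ _ _ _)
    (fun k => @latMn _ _ _ _ k (ex_intro _ e0 erefl)) h2.
  move: hz; rewrite -scaler_nat scalemxAl -scalemxAr scalemxAl => /(@cancel_B _ _ _ _ _ hB) /rowP /(_ i0).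
  rewrite ee0 !mxE => ek.
  have zn0 : (z ord0 i0)%:~R != 0 :> R.
    by apply: contraTneq isT => h; move: ek; rewrite h mulr0 => /eqP; rewrite pnatr_eq0 => /eqP k00; rewrite k00 in k0.
  exists (k%:R / (z ord0 i0)%:~R); rewrite fmorph_div rmorph_nat rmorph_int ek.
  by rewrite mulfK.
-
  move=> al be; rewrite !scal_lat => -[hA _] [_ hBe].
  set X := B *m Q^T.
  have [m m0 [hvG _]] := @pigeon _ _ _ _ (map_mx intr e0 *m (be *: X)) (@setI_sub _ _ _ _)
    (fun k => @latMn _ _ _ _ k (ex_intro _ e0 erefl)) hBe.
  have [k k0 [_ [z hz]]] := @pigeon _ _ _ _ (map_mx intr e0 *m (be *: X) *+ m) (@setI_sub _ _ _ _)
    (fun k => @latMn _ _ _ _ k hvG) hA.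
  move: hz; rewrite -mulrnA -scaler_nat -!scalemxAr !scalerA !scalemxAl /X !mulmxA.
  move=> /(congr1 (fun W => W *m Q)); rewrite -!mulmxA hQ1 !mulmx1.
  move=> /(@cancel_B _ _ _ _ _ hB) /rowP /(_ i0); rewrite ee0 !mxE => ek.
  have [->|a0] := eqVneq al 0; first by exists 0; rewrite mul0r rmorph0.
  have [->|b0] := eqVneq be 0; first by exists 0; rewrite invr0 mulr0 rmorph0.
  have zn0 : (z ord0 i0)%:~R != 0 :> R.
    apply: contraTneq isT => h; move: ek; rewrite h mulr0 => /eqP.
    rewrite mulf_eq0 (negbTE b0) /= pnatr_eq0 muln_eq0 orbF.
    by case/orP => /eqP e; [rewrite e in m0 | rewrite e in k0].
  exists ((m * k)%:R / (z ord0 i0)%:~R); rewrite fmorph_div rmorph_nat rmorph_int.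
  apply: (mulIf zn0); by rewrite divfK // mulrAC -ek mulfK.
Qed.
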